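(* For every bunch $\Delta$ and formula $\varphi$: if $[\![\lfloor\Delta\rfloor]\!]\subseteq[\![\varphi]\!]$ holds in the BI algebra $\mathcal C$ (with atoms interpreted by $[\![a]\!]=[\![a]\!]^{\mathrm{out}}$), then $\Delta\vdash_{\mathsf{cf}}\varphi$.
   Context: Formulas of BI: $\varphi,\psi ::= \top \mid \bot \mid \varphi\wedge\psi \mid \varphi\vee\psi \mid \varphi\to\psi \mid \mathsf{emp} \mid \varphi\ast\psi \mid \varphi -\!\!\ast\, \psi \mid a$, $a\in\mathrm{Atom}$. Bunches are finite binary trees whose leaves are formulas or empty bunches $\varnothing_m,\varnothing_a$ and whose internal nodes are labelled by the multiplicative comma ($\Delta_1\mathbin{,}\Delta_2$) or the additive semicolon ($\Delta_1\mathbin{;}\Delta_2$). A bunched context $\Delta(-)$ is a bunch with one leaf replaced by a hole; $\Delta(\Gamma)$ fills it with $\Gamma$. $\lfloor\Delta\rfloor$ is the formula obtained from $\Delta$ by replacing $\mathbin{,}$ by $\ast$, $\varnothing_m$ by $\mathsf{emp}$, $\mathbin{;}$ by $\wedge$, $\varnothing_a$ by $\top$. Bunch equivalence $\equiv$ is the least equivalence relation making $\mathbin{,}$ commutative, associative with unit $\varnothing_m$, $\mathbin{;}$ commutative, associative with unit $\varnothing_a$, and closed under contexts; $\mathrm{Bunch}$ is the set of bunches modulo $\equiv$. The cut-free BI sequent calculus ($\Delta\vdash_{\mathsf{cf}}\varphi$) has the rules: (ax) $a\vdash a$ for atoms $a$; (equiv) from $\Delta'\vdash\varphi$, $\Delta\equiv\Delta'$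 infer $\Delta\vdash\varphi$; (W;) from $\Delta(\Delta_1)\vdash\varphi$ infer $\Delta(\Delta_1\mathbin{;}\Delta_2)\vdash\varphi$; (C;) from $\Delta(\Delta_1\mathbin{;}\Delta_1)\vdash\varphi$ infer $\Delta(\Delta_1)\vdash\varphi$; (empR) $\varnothing_m\vdash\mathsf{emp}$; (empL) from $\Delta(\varnothing_m)\vdash\varphi$ infer $\Delta(\mathsf{emp})\vdash\varphi$; ($\ast$R) from $\Delta_1\vdash\varphi$, $\Delta_2\vdash\psi$ infer $\Delta_1\mathbin{,}\Delta_2\vdash\varphi\ast\psi$; ($\ast$L) from $\Delta(\varphi\mathbin{,}\psi)\vdash\chi$ infer $\Delta(\varphi\ast\psi)\vdash\chi$; ($-\!\ast$R) from $\Delta\mathbin{,}\varphi\vdash\psi$ infer $\Delta\vdash\varphi-\!\!\ast\,\psi$; ($-\!\ast$L) from $\Delta_1\vdash\varphi$, $\Delta(\Delta_2\mathbin{,}\psi)\vdash\chi$ infer $\Delta((\Delta_1\mathbin{,}\Delta_2)\mathbin{,}(\varphi-\!\!\ast\,\psi))\vdash\chi$; ($\top$R) $\varnothing_a\vdash\top$; ($\top$L) from $\Delta(\varnothing_a)\vdash\varphi$ infer $\Delta(\top)\vdash\varphi$; ($\wedge$R) from $\Delta_1\vdash\varphi$, $\Delta_2\vdash\psi$ infer $\Delta_1\mathbin{;}\Delta_2\vdash\varphi\wedge\psi$; ($\wedge$L) from $\Delta(\varphi\mathbin{;}\psi)\vdash\chi$ infer $\Delta(\varphi\wedge\psi)\vdash\chi$;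 ($\to$R) from $\Delta\mathbin{;}\varphi\vdash\psi$ infer $\Delta\vdash\varphi\to\psi$; ($\to$L) from $\Delta_1\vdash\varphi$, $\Delta(\Delta_2\mathbin{;}\psi)\vdash\chi$ infer $\Delta((\Delta_1\mathbin{;}\Delta_2)\mathbin{;}(\varphi\to\psi))\vdash\chi$; ($\bot$L) $\Delta(\bot)\vdash\varphi$; ($\vee$R1/2) from $\Delta\vdash\varphi$ (resp. $\Delta\vdash\psi$) infer $\Delta\vdash\varphi\vee\psi$; ($\vee$L) from $\Delta(\varphi)\vdash\chi$, $\Delta(\psi)\vdash\chi$ infer $\Delta(\varphi\vee\psi)\vdash\chi$. (No cut rule.) For a formula $\varphi$, $[\![\varphi]\!]^{\mathrm{out}}=\{\Delta\in\mathrm{Bunch}\mid\Delta\vdash_{\mathsf{cf}}\varphi\}$. For $X\subseteq\mathrm{Bunch}$, $\mathrm{cl}(X)=\bigcap\{[\![\varphi]\!]^{\mathrm{out}}\mid X\subseteq[\![\varphi]\!]^{\mathrm{out}}\}$, and $\mathcal C=\{X\subseteq\mathrm{Bunch}\mid X=\mathrm{cl}(X)\}$. $\mathcal C$ is a BI algebra with operations: $\mathsf{emp}=\mathrm{cl}(\{\varnothing_m\})$, $\top=\mathrm{Bunch}$, $\bot=\mathrm{cl}(\emptyset)$, $X\vee Y=\mathrm{cl}(X\cup Y)$, $X\wedge Y=X\cap Y$, $X\ast Y=\mathrm{cl}(\{\Delta\mathbin{,}\Delta'\mid\Delta\in X,\Delta'\in Y\})$, $X-\!\!\ast\,Y=\{\Delta\mid\forall\Delta'\in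 X.\ (\Delta\mathbin{,}\Delta')\in Y\}$, $X\to Y=\{\Delta\mid\forall\Delta'\in X.\ (\Delta\mathbin{;}\Delta')\in Y\}$; the order is inclusion. Formulas are interpreted homomorphically in $\mathcal C$ given the interpretation of atoms. *)

(* Defs.v *)
Set Implicit Arguments.

Section BI.
Variable Atom : Type.

Inductive formula : Type :=
| FTop | FBot
| FAnd (p q : formula) | FOr (p q : formula) | FImp (p q : formula)
| FEmp | FStar (p q : formula) | FWand (p q : formula)
| FAtom (a : Atom).

(* Bunches (raw trees; Bunch = bunch modulo bequiv) *)
Inductive bunch : Type :=
| BForm (p : formula)
| BEmpM
| BEmpA
| BComma (D1 D2 : bunch)
| BSemi (D1 D2 : bunch).

Inductive bctx : Type :=
| CHole
| CCommaL (C : bctx) (D : bunch)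
| CCommaR (D : bunch) (C : bctx)
| CSemiL (C : bctx) (D : bunch)
| CSemiR (D : bunch) (C : bctx).

Fixpoint fill (C : bctx) (G : bunch) : bunch :=
  match C with
  | CHole => G
  | CCommaL C' D => BComma (fill C' G) D
  | CCommaR D C' => BComma D (fill C' G)
  | CSemiL C' D => BSemi (fill C' G) D
  | CSemiR D C' => BSemi D (fill C' G)
  end.

Fixpoint floor (D : bunch) : formula :=
  match D with
  | BForm p => p
  | BEmpM => FEmp
  | BEmpA => FTop
  | BComma D1 D2 => FStar (floor D1) (floor D2)
  | BSemi D1 D2 => FAnd (floor D1) (floor D2)
  end.

Inductive bequiv : bunch -> bunch -> Prop :=
| beq_refl D : bequiv D D
| beq_sym D D' : bequiv D D' -> bequiv D' D
| beq_trans D1 D2 D3 : bequiv D1 D2 -> bequiv D2 D3 -> bequiv D1 D3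
| beq_comma_comm D1 D2 : bequiv (BComma D1 D2) (BComma D2 D1)
| beq_comma_assoc D1 D2 D3 :
    bequiv (BComma D1 (BComma D2 D3)) (BComma (BComma D1 D2) D3)
| beq_comma_unit D : bequiv (BComma D BEmpM) D
| beq_semi_comm D1 D2 : bequiv (BSemi D1 D2) (BSemi D2 D1)
| beq_semi_assoc D1 D2 D3 :
    bequiv (BSemi D1 (BSemi D2 D3)) (BSemi (BSemi D1 D2) D3)
| beq_semi_unit D : bequiv (BSemi D BEmpA) D
| beq_ctx C G G' : bequiv G G' -> bequiv (fill C G) (fill C G').

Inductive cf : bunch -> formula -> Prop :=
| cf_ax a : cf (BForm (FAtom a)) (FAtom a)
| cf_equiv D D' p : cf D' p -> bequiv D D' -> cf D p
| cf_Wsemi C D1 D2 p : cf (fill C D1) p -> cf (fill C (BSemi D1 D2)) p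
| cf_Csemi C D1 p : cf (fill C (BSemi D1 D1)) p -> cf (fill C D1) p
| cf_empR : cf BEmpM FEmp
| cf_empL C p : cf (fill C BEmpM) p -> cf (fill C (BForm FEmp)) p
| cf_starR D1 D2 p q : cf D1 p -> cf D2 q -> cf (BComma D1 D2) (FStar p q)
| cf_starL C p q r :
    cf (fill C (BComma (BForm p) (BForm q))) r -> cf (fill C (BForm (FStar p q))) r
| cf_wandR D p q : cf (BComma D (BForm p)) q -> cf D (FWand p q)
| cf_wandL C D1 D2 p q r :
    cf D1 p -> cf (fill C (BComma D2 (BForm q))) r ->
    cf (fill C (BComma (BComma D1 D2) (BForm (FWand p q)))) r
| cf_topR : cf BEmpA FTop
| cf_topL C p : cf (fill C BEmpA) p -> cf (fill C (BForm FTop)) p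
| cf_andR D1 D2 p q : cf D1 p -> cf D2 q -> cf (BSemi D1 D2) (FAnd p q)
| cf_andL C p q r :
    cf (fill C (BSemi (BForm p) (BForm q))) r -> cf (fill C (BForm (FAnd p q))) r
| cf_impR D p q : cf (BSemi D (BForm p)) q -> cf D (FImp p q)
| cf_impL C D1 D2 p q r :
    cf D1 p -> cf (fill C (BSemi D2 (BForm q))) r ->
    cf (fill C (BSemi (BSemi D1 D2) (BForm (FImp p q)))) r
| cf_botL C p : cf (fill C (BForm FBot)) p
| cf_orR1 D p q : cf D p -> cf D (FOr p q)
| cf_orR2 D p q : cf D q -> cf D (FOr p q)
| cf_orL C p q r :
    cf (fill C (BForm p)) r -> cf (fill C (BForm q)) r -> cf (fill C (BForm (FOr p q))) r.

(* All sets actually used are closed under bequiv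
   (every [[phi]]^out is, by the (equiv) rule), so predicates on raw bunches
   faithfully represent subsets of Bunch = bunch / bequiv. *)
Definition bset := bunch -> Prop.

Definition out (p : formula) : bset := fun D => cf D p.

Definition cl (X : bset) : bset :=
  fun G => forall p : formula, (forall D, X D -> out p D) -> out p G.

Definition C_emp : bset := cl (fun G => G = BEmpM).
Definition C_top : bset := fun _ => True.
Definition C_bot : bset := cl (fun _ => False).
Definition C_or (X Y : bset) : bset := cl (fun G => X G \/ Y G).
Definition C_and (X Y : bset) : bset := fun G => X G /\ Y G.
Definition C_star (X Y : bset) : bset :=
  cl (fun G => exists D D', X D /\ Y D' /\ G = BComma D D').
Definition C_wand (X Y : bset) : bset :=
  fun D => forall D', X D' -> Y (BComma D D').
Definition C_imp (X Y : bset) : bset :=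
  fun D => forall D', X D' -> Y (BSemi D D').

Fixpoint sem (p : formula) : bset :=
  match p with
  | FTop => C_top
  | FBot => C_bot
  | FAnd p q => C_and (sem p) (sem q)
  | FOr p q => C_or (sem p) (sem q)
  | FImp p q => C_imp (sem p) (sem q)
  | FEmp => C_emp
  | FStar p q => C_star (sem p) (sem q)
  | FWand p q => C_wand (sem p) (sem q)
  | FAtom a => out (FAtom a)
  end.

End BI.

(* Main.v *)
Require Import Defs.

Section Pf.
Variable A : Type.

Definition Sat (X : bset A) : Prop :=
  (forall G G', bequiv G' G -> X G -> X G') /\
  (forall C D1 D2, X (fill C D1) -> X (fill C (BSemi D1 D2))) /\
  (forall C p q, X (fill C (BSemi (BForm p) (BForm q))) -> X (fill C (BForm (FAnd p q)))) /\
  (forall C D1 D2 p q, cf D1 p -> X (fill C (BSemi D2 (BForm q))) ->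
      X (fill C (BSemi (BSemi D1 D2) (BForm (FImp p q))))) /\
  (forall C D1 D2 p q, cf D1 p -> X (fill C (BComma D2 (BForm q))) ->
      X (fill C (BComma (BComma D1 D2) (BForm (FWand p q))))).

Lemma sat_out p : Sat (out p).
Proof.
  unfold Sat, out; repeat split; intros.
  - eapply cf_equiv; eauto.
  - apply cf_Wsemi; auto.
  - apply cf_andL; auto.
  - apply cf_impL; auto.
  - apply cf_wandL; auto.
Qed.

Lemma sat_cl Y : Sat (cl Y).
Proof.
  unfold Sat, cl; repeat split; intros;
  match goal with |- out ?r _ => destruct (sat_out r) as (h1&h2&h3&h4&h5); eauto end.
Qed.

Lemma sat_sem p : Sat (sem p).
Proof.
  induction p; simpl; try apply sat_cl; try apply sat_out.
  - unfold Sat, C_top; repeat split; auto.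
  - destruct IHp1 as (a1&a2&a3&a4&a5); destruct IHp2 as (b1&b2&b3&b4&b5).
    unfold Sat, C_and; repeat split; intros;
    cbv beta in *; repeat match goal with H: _ /\ _ |- _ => destruct H end; eauto.
  - destruct IHp2 as (b1&b2&b3&b4&b5).
    unfold Sat, C_imp; repeat split; intros.
    + eapply b1; [|apply H0; eauto]. apply (beq_ctx (CSemiL (CHole A) D')); auto.
    + apply (b2 (CSemiL C D')). apply H; auto.
    + apply (b3 (CSemiL C D')). apply H; auto.
    + apply (b4 (CSemiL C D')); auto. apply H0; auto.
    + apply (b5 (CSemiL C D')); auto. apply H0; auto.
  - destruct IHp2 as (b1&b2&b3&b4&b5).
    unfold Sat, C_wand; repeat split; intros.
    + eapply b1; [|apply H0; eauto]. apply (beq_ctx (CCommaL (CHole A) D')); auto.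
    + apply (b2 (CCommaL C D')). apply H; auto.
    + apply (b3 (CCommaL C D')). apply H; auto.
    + apply (b4 (CCommaL C D')); auto. apply H0; auto.
    + apply (b5 (CCommaL C D')); auto. apply H0; auto.
Qed.

Lemma top_any (D : bunch A) : cf D (FTop A).
Proof.
  eapply cf_equiv; [apply (cf_Wsemi (CHole A) (BEmpA A) D); apply (cf_topR A)|].
  simpl. eapply beq_trans; [|apply beq_semi_comm]. apply beq_sym, beq_semi_unit.
Qed.

Lemma okada (p : formula A) : sem p (BForm p) /\ (forall G, sem p G -> cf G p).
Proof.
  induction p; simpl.
  - split; [exact I| intros; apply top_any].
  - split.
    + intros r _. apply (cf_botL (CHole A)).
    + intros G H. apply H. intros _ [].
  - destruct IHp1 as [a1 a2], IHp2 as [b1 b2].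
    destruct (sat_sem p1) as (h1&h2&h3&_), (sat_sem p2) as (k1&k2&k3&_).
    split.
    + split.
      * apply (h3 (CHole A)). simpl. apply (h2 (CHole A)). exact a1.
      * apply (k3 (CHole A)). simpl. eapply k1; [apply beq_semi_comm|].
        apply (k2 (CHole A)). exact b1.
    + intros G [H1 H2]. apply (cf_Csemi (CHole A)). simpl. apply cf_andR; auto.
  - destruct IHp1 as [a1 a2], IHp2 as [b1 b2]. split.
    + intros r H. apply (cf_orL (CHole A)); simpl; apply H; auto.
    + intros G H. apply H. intros D [HD|HD]; [apply cf_orR1|apply cf_orR2]; auto.
  - destruct IHp1 as [a1 a2], IHp2 as [b1 b2].
    destruct (sat_sem p2) as (k1&_&_&k4&_). split.
    + intros D' HD'.
      eapply k1; [|apply (k4 (CHole A) D' (BEmpA A) p1 p2); simpl; auto].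
      * eapply beq_trans; [apply beq_semi_comm|].
        apply (beq_ctx (CSemiL (CHole A) _)). simpl. apply beq_sym, beq_semi_unit.
      * eapply k1; [|exact b1]. eapply beq_trans; [apply beq_semi_comm|]. apply beq_semi_unit.
    + intros G H. apply cf_impR. apply b2. apply H. auto.
  - split.
    + intros r H. apply (cf_empL (CHole A)). simpl. apply H. reflexivity.
    + intros G H. apply H. intros D ->. apply cf_empR.
  - destruct IHp1 as [a1 a2], IHp2 as [b1 b2]. split.
    + intros r H. apply (cf_starL (CHole A)). simpl. apply H. eauto.
    + intros G H. apply H. intros D (D1&D2&H1&H2&->). apply cf_starR; auto.
  - destruct IHp1 as [a1 a2], IHp2 as [b1 b2].
    destruct (sat_sem p2) as (k1&_&_&_&k5). split.
    + intros D' HD'.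
      eapply k1; [|apply (k5 (CHole A) D' (BEmpM A) p1 p2); simpl; auto].
      * eapply beq_trans; [apply beq_comma_comm|].
        apply (beq_ctx (CCommaL (CHole A) _)). simpl. apply beq_sym, beq_comma_unit.
      * eapply k1; [|exact b1]. eapply beq_trans; [apply beq_comma_comm|]. apply beq_comma_unit.
    + intros G H. apply cf_wandR. apply b2. apply H. auto.
  - split; [apply cf_ax| auto].
Qed.

Lemma self_sem (D : bunch A) : sem (floor D) D.
Proof.
  induction D; simpl.
  - apply okada.
  - intros r H. apply H. reflexivity.
  - exact I.
  - intros r H. apply H. eauto.
  - destruct (sat_sem (floor D1)) as (h1&h2&_), (sat_sem (floor D2)) as (k1&k2&_).
    split.
    + apply (h2 (CHole A)). exact IHD1.
    + eapply k1; [apply beq_semi_comm|]. apply (k2 (CHole A)). exact IHD2.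
Qed.

End Pf.

Theorem theorem6p7 (Atom : Type) (D : bunch Atom) (p : formula Atom) :
  (forall G : bunch Atom, sem (floor D) G -> sem p G) -> cf D p.
Proof.
  intros H. apply (proj2 (okada _ p)). apply H. apply (self_sem _ D).
Qed.
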